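(* Let $\Gamma$ be a temporal theory, let $M=((W,\preccurlyeq,S),V)$ be a total THT model, and let $T=\{\circ^ip\mid p\in V((i,0)),\ i\ge 0\}\subseteq\mathbb{P}^{\circ}$ (so that $V((i,0))=V((i,1))=\{p\mid \circ^ip\in T\}$ for all $i\ge0$). Then $M$ is a temporal equilibrium model of $\Gamma$ if and only if $T$ is a $\mathrm{THT}$-temporal safe belief set of $\Gamma$.
   Context: Fix a countable set $\mathbb{P}$ of atoms. Temporal formulas: $\varphi ::= p\mid\bot\mid\varphi\wedge\varphi\mid\varphi\vee\varphi\mid\varphi\to\varphi\mid\circ\varphi\mid\varphi\,\mathsf{U}\,\varphi\mid\varphi\,\mathsf{R}\,\varphi$; $\neg\varphi:=\varphi\to\bot$, $\circ^0\varphi:=\varphi$, $\circ^{i+1}\varphi:=\circ\circ^i\varphi$. The THT frame is $W=\mathbb{N}\times\{0,1\}$, $(i,h)\preccurlyeq(j,t)$ iff $i=j$ and $h\le t$, $S((i,k))=(i+1,k)$. A THT model is $((W,\preccurlyeq,S),V)$ with $V:W\to2^{\mathbb{P}}$ and $V((i,0))\subseteq V((i,1))$. Satisfaction: $M,w\models p$ iff $p\in V(w)$; $\bot$ never; $\wedge,\vee$ pointwise; $M,w\models\varphi\to\psi$ iff for all $v\succcurlyeq w$, $M,v\models\varphi$ implies $M,v\models\psi$; $M,w\models\circ\varphi$ iff $M,S(w)\models\varphi$; $\varphi\,\mathsf{U}\,\psi$: some $k\ge0$ with $M,S^k(w)\models\psi$ and $M,S^i(w)\models\varphi$ for all $0\le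 i<k$; $\varphi\,\mathsf{R}\,\psi$: for all $k\ge0$, $M,S^k(w)\models\psi$ or $M,S^i(w)\models\varphi$ for some $0\le i<k$. $M$ is total if $V((i,0))=V((i,1))$ for all $i$. For THT models $M'=(\cdot,V')$, $M=(\cdot,V)$: $M'\le M$ iff $V'((i,1))=V((i,1))$ and $V'((i,0))\subseteq V((i,0))$ for all $i$; $M'<M$ iff $M'\le M$ and $V'\neq V$. A temporal equilibrium model of a theory $\Gamma$ is a total THT model $M$ with $M,(0,0)\models\Gamma$ such that no THT model $M'<M$ has $M',(0,0)\models\Gamma$. $\Gamma$ is THT-consistent if some THT model satisfies all of $\Gamma$ at some world; $\Gamma\models_{\mathrm{THT}}\Delta$ means every THT model and world satisfying all of $\Gamma$ satisfies all of $\Delta$. $\mathbb{P}^{\circ}:=\{\circ^ip\mid p\in\mathbb{P},i\ge0\}$. $T\subseteq\mathbb{P}^{\circ}$ is a THT-temporal safe belief set of $\Gamma$ if $\Sigma_T:=\Gamma\cup\{\circ^i\neg\neg p\mid \circ^ip\in T\}\cup\{\circ^i\neg p\mid\circ^ip\notin T\}$ is THT-consistent and $\Sigma_T\models_{\mathrm{THT}}T$. *)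

(* Defs.v *)
From Stdlib Require Import Arith.
Set Implicit Arguments.

Section THT.
Variable P : Type.

Inductive tformula : Type :=
| TAtom : P -> tformula
| TBot : tformula
| TAnd : tformula -> tformula -> tformula
| TOr : tformula -> tformula -> tformula
| TImp : tformula -> tformula -> tformula
| TNext : tformula -> tformula
| TUntil : tformula -> tformula -> tformula
| TRelease : tformula -> tformula -> tformula.

Definition TNeg (f : tformula) : tformula := TImp f TBot.

Fixpoint TNextN (i : nat) (f : tformula) : tformula :=
  match i with 0 => f | S j => TNext (TNextN j f) end.

(* Worlds W = N x {0,1}, with 0 = false ("here"), 1 = true ("there"). *)
Definition world := (nat * bool)%type.

Definition wle (w v : world) : Prop := fst w = fst v /\ implb (snd w) (snd v) = true.

Definition succ (w : world) : world := (S (fst w), snd w).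

Definition succN (k : nat) (w : world) : world := Nat.iter k succ w.

Definition valuation := world -> P -> Prop.

Definition is_THT (V : valuation) : Prop :=
  forall i p, V (i, false) p -> V (i, true) p.

Definition total (V : valuation) : Prop :=
  forall i p, V (i, false) p <-> V (i, true) p.

Fixpoint sat (V : valuation) (w : world) (f : tformula) : Prop :=
  match f with
  | TAtom p => V w p
  | TBot => False
  | TAnd a b => sat V w a /\ sat V w b
  | TOr a b => sat V w a \/ sat V w b
  | TImp a b => forall v, wle w v -> sat V v a -> sat V v b
  | TNext a => sat V (succ w) a
  | TUntil a b => exists k, sat V (succN k w) b /\
                            forall i, i < k -> sat V (succN i w) a
  | TRelease a b => forall k, sat V (succN k w) b \/
                              exists i, i < k /\ sat V (succN i w) a
  end.

Definition theory := tformula -> Prop.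

Definition sat_theory (V : valuation) (w : world) (G : theory) : Prop :=
  forall f, G f -> sat V w f.

Definition THT_consistent (G : theory) : Prop :=
  exists V w, is_THT V /\ sat_theory V w G.

Definition THT_entails (G D : theory) : Prop :=
  forall V w, is_THT V -> sat_theory V w G -> sat_theory V w D.

Definition model_le (V' V : valuation) : Prop :=
  (forall i p, V' (i, true) p <-> V (i, true) p) /\
  (forall i p, V' (i, false) p -> V (i, false) p).

Definition model_lt (V' V : valuation) : Prop :=
  model_le V' V /\ exists w p, ~ (V' w p <-> V w p).

Definition temporal_equilibrium_model (G : theory) (V : valuation) : Prop :=
  is_THT V /\ total V /\ sat_theory V (0, false) G /\
  ~ (exists V', is_THT V' /\ model_lt V' V /\ sat_theory V' (0, false) G).

(* Subsets T of P^circ = { circ^i p }, encoded by the pair (i, p). *)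
Definition pcirc_set := nat -> P -> Prop.

Definition pcirc_theory (T : pcirc_set) : theory :=
  fun f => exists i p, T i p /\ f = TNextN i (TAtom p).

Definition Sigma_T (G : theory) (T : pcirc_set) : theory :=
  fun f => G f
    \/ (exists i p, T i p /\ f = TNextN i (TNeg (TNeg (TAtom p))))
    \/ (exists i p, ~ T i p /\ f = TNextN i (TNeg (TAtom p))).

Definition THT_temporal_safe_belief_set (G : theory) (T : pcirc_set) : Prop :=
  THT_consistent (Sigma_T G T) /\ THT_entails (Sigma_T G T) (pcirc_theory T).

End THT.

(* Main.v *)
Require Import Defs.
From Stdlib Require Import Arith Lia Classical.

Set Implicit Arguments.
Section L.
Variable P : Type.

Lemma succN_eq (k a : nat) (b : bool) : succN k (a, b) = (k + a, b).
Proof. induction k; [reflexivity|]. change (succN (S k) (a,b)) with (succ (succN k (a,b))). rewrite IHk. reflexivity. Qed.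

Lemma sat_TNextN (V : valuation P) i a b f :
  sat V (a, b) (TNextN i f) <-> sat V (i + a, b) f.
Proof.
  revert a. induction i; intros a; [simpl; tauto|].
  change (sat V (S a, b) (TNextN i f) <-> sat V (S i + a, b) f).
  rewrite IHi. replace (i + S a) with (S (i + a)) by lia. tauto.
Qed.

Definition shiftV (V : valuation P) (j : nat) : valuation P :=
  fun w p => V (fst w + j, snd w) p.

Lemma sat_shift (V : valuation P) j f : forall a b,
  sat (shiftV V j) (a, b) f <-> sat V (a + j, b) f.
Proof.
  induction f; intros a b; simpl.
  - unfold shiftV; simpl; tauto.
  - tauto.
  - rewrite IHf1, IHf2; tauto.
  - rewrite IHf1, IHf2; tauto.
  - split.
    + intros H [c d] [Hc Hd] H1. simpl in Hc, Hd. subst c.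
      apply (IHf2 a d). apply (H (a, d)). split; simpl; auto. apply IHf1. auto.
    + intros H [c d] [Hc Hd] H1. simpl in Hc, Hd. subst c.
      apply IHf2. apply (H (a + j, d)). split; simpl; auto. apply IHf1. auto.
  - unfold succ; simpl. rewrite IHf. tauto.
  - split; intros [k [H1 H2]]; exists k.
    + rewrite succN_eq in *. rewrite IHf2 in H1. rewrite Nat.add_assoc. split; auto.
      intros i Hi. specialize (H2 i Hi). rewrite succN_eq in *. rewrite IHf1 in H2.
      rewrite Nat.add_assoc. auto.
    + rewrite succN_eq in *. rewrite IHf2. rewrite <- Nat.add_assoc. split; auto.
      intros i Hi. specialize (H2 i Hi). rewrite succN_eq in *. rewrite IHf1.
      rewrite <- Nat.add_assoc. auto.
  - split; intros H k; specialize (H k); rewrite !succN_eq in *.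
    + destruct H as [H|[i [Hi H]]].
      * left. rewrite IHf2 in H. rewrite Nat.add_assoc. auto.
      * right. exists i. split; auto. rewrite succN_eq in *. rewrite IHf1 in H.
        rewrite Nat.add_assoc. auto.
    + destruct H as [H|[i [Hi H]]].
      * left. rewrite IHf2. rewrite <- Nat.add_assoc. auto.
      * right. exists i. split; auto. rewrite succN_eq in *. rewrite IHf1.
        rewrite <- Nat.add_assoc. auto.
Qed.

Lemma sat_there (V1 V2 : valuation P) f :
  (forall i p, V1 (i, true) p <-> V2 (i, true) p) ->
  forall n, sat V1 (n, true) f <-> sat V2 (n, true) f.
Proof.
  intros HV. induction f; intros n; simpl.
  - apply HV.
  - tauto.
  - rewrite IHf1, IHf2; tauto.
  - rewrite IHf1, IHf2; tauto.
  - split; intros H [c d] [Hc Hd] H1; simpl in Hc, Hd; subst c; destruct d; try discriminate;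
      apply IHf2; apply H; [split; simpl; auto| apply IHf1; auto | split; simpl; auto | apply IHf1; auto].
  - unfold succ; simpl. apply IHf.
  - split; intros [k [H1 H2]]; exists k; rewrite succN_eq in *; split.
    + apply IHf2; auto.
    + intros i Hi. specialize (H2 i Hi). rewrite succN_eq in *. apply IHf1; auto.
    + apply IHf2; auto.
    + intros i Hi. specialize (H2 i Hi). rewrite succN_eq in *. apply IHf1; auto.
  - split; intros H k; specialize (H k); rewrite !succN_eq in *;
      (destruct H as [H|[i [Hi H]]]; [left; apply IHf2; auto | right; exists i; split; auto;
       rewrite succN_eq in *; apply IHf1; auto]).
Qed.

Lemma wle_trans (u v w : world) : wle u v -> wle v w -> wle u w.
Proof.
  destruct u as [a b], v as [c d], w as [e g]; unfold wle; simpl.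
  intros [H1 H2] [H3 H4]; split; [congruence|].
  destruct b, d, g; simpl in *; congruence.
Qed.

Lemma persist (V : valuation P) f : is_THT V ->
  forall w v, wle w v -> sat V w f -> sat V v f.
Proof.
  intros HT. induction f; intros [a b] [c d] [Hc Hd]; simpl in Hc, Hd; subst c; simpl.
  - destruct b, d; simpl in Hd; try discriminate; auto.
  - auto.
  - intros [H1 H2]; split; [eapply IHf1|eapply IHf2]; eauto; split; auto.
  - intros [H1|H2]; [left; eapply IHf1|right; eapply IHf2]; eauto; split; auto.
  - intros H u Hu. apply H. eapply wle_trans; eauto. split; auto.
  - unfold succ; simpl. apply IHf. split; auto.
  - intros [k [H1 H2]]. exists k. rewrite succN_eq in *. split.
    + eapply IHf2; [|exact H1]. split; auto.
    + intros i Hi. specialize (H2 i Hi). rewrite succN_eq in *.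
      eapply IHf1; [|exact H2]. split; auto.
  - intros H k. specialize (H k). rewrite !succN_eq in *.
    destruct H as [H|[i [Hi H]]].
    + left. eapply IHf2; [|exact H]. split; auto.
    + right. exists i. split; auto. rewrite succN_eq in *.
      eapply IHf1; [|exact H]. split; auto.
Qed.

Lemma sat_total (V : valuation P) f : is_THT V -> total V ->
  forall n, sat V (n, false) f <-> sat V (n, true) f.
Proof.
  intros HT Htot. induction f; intros n; simpl.
  - apply Htot.
  - tauto.
  - rewrite IHf1, IHf2; tauto.
  - rewrite IHf1, IHf2; tauto.
  - split.
    + intros H v Hv. apply H. eapply wle_trans; eauto. split; auto.
    + intros H [c d] [Hc Hd] H1. simpl in Hc, Hd; subst c. destruct d.
      * apply H; auto. split; auto.
      * apply IHf2. apply H. split; auto. apply IHf1; auto.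
  - unfold succ; simpl. apply IHf.
  - split; intros [k [H1 H2]]; exists k; rewrite succN_eq in *; split.
    + apply IHf2; auto.
    + intros i Hi. specialize (H2 i Hi). rewrite succN_eq in *. apply IHf1; auto.
    + apply IHf2; auto.
    + intros i Hi. specialize (H2 i Hi). rewrite succN_eq in *. apply IHf1; auto.
  - split; intros H k; specialize (H k); rewrite !succN_eq in *;
      (destruct H as [H|[i [Hi H]]]; [left; apply IHf2; auto | right; exists i; split; auto;
       rewrite succN_eq in *; apply IHf1; auto]).
Qed.

Lemma sat_nn (V : valuation P) n b p :
  sat V (n, b) (TNeg (TNeg (TAtom p))) -> V (n, true) p.
Proof.
  simpl. intros H. apply NNPP. intros Hn. apply (H (n, true)).
  - split; simpl; auto. destruct b; auto.
  - intros [c d] [Hc Hd] Hp. simpl in Hc, Hd; subst c. destruct d; try discriminate. auto.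
Qed.

Lemma sat_n (V : valuation P) n b p :
  sat V (n, b) (TNeg (TAtom p)) -> ~ V (n, true) p.
Proof.
  simpl. intros H Hp. apply (H (n, true)); auto. split; simpl; auto. destruct b; auto.
Qed.

Lemma key (G : theory P) (V V' : valuation P) j h :
  is_THT V ->
  sat_theory V' (j, h) (Sigma_T G (fun i p => V (i, false) p)) ->
  forall i p, V' (i + j, true) p <-> V (i, false) p.
Proof.
  intros HT HS i p. split.
  - intros H. apply NNPP. intros Hn.
    assert (Hs := HS (TNextN i (TNeg (TAtom p)))).
    refine (@sat_n V' (i + j) h p _ H).
    apply sat_TNextN. apply Hs. right. right. exists i, p. auto.
  - intros H.
    assert (Hs := HS (TNextN i (TNeg (TNeg (TAtom p))))).
    apply (@sat_nn V' (i + j) h p).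
    apply sat_TNextN. apply Hs. right. left. exists i, p. auto.
Qed.

End L.

Theorem proposition5p3 (P : Type) (P_countable : exists f : P -> nat, forall x y, f x = f y -> x = y)
  (G : theory P) (V : valuation P) :
  is_THT V -> total V ->
  (temporal_equilibrium_model G V <->
   THT_temporal_safe_belief_set G (fun i p => V (i, false) p)).
Proof.
  intros HT Htot. split.
  - intros [_ [_ [HG Hmin]]]. split.
    + exists V, (0, false). split; auto.
      intros f [Hf|[[i [p [Hp ->]]]|[i [p [Hp ->]]]]]; auto.
      * apply sat_TNextN. rewrite Nat.add_0_r. simpl.
        intros [c d] [Hc Hd] Hn. simpl in Hc; subst c.
        apply (Hn (i, true)). split; simpl; auto. destruct d; auto. auto.
      * apply sat_TNextN. rewrite Nat.add_0_r. simpl.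
        intros [c d] [Hc Hd] Hv. simpl in Hc; subst c. apply Hp.
        destruct d; auto. apply Htot; auto.
    + intros V' [j h] HT' HS f [i [p [Hp ->]]].
      apply sat_TNextN. simpl.
      assert (HK := key HT HS).
      destruct h.
      * apply HK; auto.
      * assert (Heq : forall w p, shiftV V' j w p <-> V w p).
        { intros w q. apply NNPP. intros Hne. apply Hmin. exists (shiftV V' j). split; [|split].
          - intros a q' H. unfold shiftV in *; simpl in *. apply HT'; auto.
          - split; [split|exists w, q; auto].
            + intros a q'. unfold shiftV; simpl. rewrite HK. apply Htot.
            + intros a q' H. unfold shiftV in *; simpl in *. apply HK. apply HT'. auto.
          - intros g Hg. apply (@sat_shift P V' j g 0 false). simpl. apply HS. left. auto. }
        apply (Heq (i, false) p). auto.
  - intros [[V' [[j h] [HT' HS]]] Hent].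
    assert (HK := key HT HS).
    split; [auto|split; [auto|split]].
    + intros g Hg. apply sat_total; auto.
      apply (sat_there (shiftV V' j)).
      { intros i p. unfold shiftV; simpl. rewrite HK. apply Htot. }
      apply sat_shift. simpl.
      assert (H := HS g (or_introl Hg)).
      destruct h; auto. eapply persist; [exact HT'| |exact H]. split; simpl; auto.
    + intros [V'' [HT'' [[[Hthere Hhere] [[c d] [p Hne]]] HG'']]].
      assert (HS'' : sat_theory V'' (0, false) (Sigma_T G (fun i p => V (i, false) p))).
      { intros f [Hf|[[i [q [Hq ->]]]|[i [q [Hq ->]]]]]; auto.
        - apply sat_TNextN. rewrite Nat.add_0_r. simpl.
          intros [c' d'] [Hc Hd] Hn. simpl in Hc; subst c'.
          apply (Hn (i, true)). split; simpl; auto. destruct d'; auto.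
          apply Hthere. apply HT; auto.
        - apply sat_TNextN. rewrite Nat.add_0_r. simpl.
          intros [c' d'] [Hc Hd] Hv. simpl in Hc; subst c'. apply Hq.
          apply Htot. apply Hthere. destruct d'; auto. }
      apply Hne. destruct d.
      * apply Hthere.
      * split; [apply Hhere|].
        intros Hp. assert (H := Hent V'' (0, false) HT'' HS'' (TNextN c (TAtom p))).
        assert (H' : sat V'' (0, false) (TNextN c (TAtom p))).
        { apply H. exists c, p. auto. }
        apply sat_TNextN in H'. rewrite Nat.add_0_r in H'. exact H'.
Qed.
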